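(* Consider the Black-Scholes model and the Bermudan moving average option described in the context, with continuation value functions $\mathcal{C}_n$, $n\in\{M,\dots,N\}$. Then for every $n\in\{M,\dots,N\}$, every positive real number $\kappa$ and every admissible value $\mathbf{b}$ of $\mathbf{B}_n$ (a vector of positive reals of the appropriate dimension), \[ \mathcal{C}_n(\mathbf{b})=\kappa\,\mathcal{C}_n\!\left(\tfrac{1}{\kappa}\mathbf{b}\right), \] i.e. the continuation value is positively homogeneous of degree one.
   Context: Under a risk-neutral probability the underlying follows the Black-Scholes dynamics $dS_t/S_t=r\,dt+\sigma\,dB_t$ with constants $r$, $\sigma>0$, $S_0>0$, and $(B_t)$ a Brownian motion; hence conditionally on $S_{t_n}$, $S_{t_{n+1}}=S_{t_n}\exp\big((r-\sigma^2/2)\Delta t+\sigma\sqrt{\Delta t}\,G\big)$ with $G\sim\mathcal N(0,1)$ independent of the past. Fix a maturity $T>0$, integers $2\le M\le N$, $\Delta t=T/N$, $t_n=n\Delta t$. For $0\le n_1\le n_2\le N$ let $A_{n_1}^{n_2}=\frac{1}{n_2-n_1+1}\sum_{j=n_1}^{n_2}S_{t_j}$ (so $A_n^n=S_{t_n}$). For $n\in\{M,\dots,N\}$ let $J_n=\{n-M+1,\dots,\min\{n-1,N-M+1\}\}\cup\{n\}$ and define the vector of partial averages $\mathbf{A}_n=(A_j^n)_{j\in J_n}$ (in increasing order of $j$) and $\mathbf{B}_n=(A_j^n)_{j\in J_n,\ j\ge n-M+2}$, i.e. $\mathbf{A}_n$ with its first component $A_{n-M+1}^n$ removed. The components of $\mathbf{A}_{n+1}$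 are $A_{n+1}^{n+1}=S_{t_{n+1}}$ and $A_j^{n+1}=\frac{(n-j+1)A_j^n+S_{t_{n+1}}}{n-j+2}$, and these are functions of $\mathbf{B}_n$ and $S_{t_{n+1}}$. The payoff at $t_n$ is $\Psi_n(\mathbf{A}_n)=\max(0,A_n^n-A_{n-M+1}^n)$, and the option may be exercised at any $t_n$, $n=M,\dots,N$. The continuation values are defined by backward recursion: $\mathcal{C}_N\equiv 0$, $\mathcal{V}_n(\mathbf{A}_n)=\max(\Psi_n(\mathbf{A}_n),\mathcal{C}_n(\mathbf{B}_n))$, and for $n=N-1,\dots,M$, $\mathcal{C}_n(\mathbf{B}_n)=\mathbb{E}\big[e^{-r\Delta t}\mathcal{V}_{n+1}(\mathbf{A}_{n+1})\,\big|\,\mathbf{B}_n\big]$, viewed as a function of the value of $\mathbf{B}_n$. *)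

(* Defs.v *)
From HB Require Import structures.
From mathcomp Require Import all_boot all_order all_algebra.
From mathcomp Require Import all_classical all_reals all_analysis.
Set Implicit Arguments. Unset Strict Implicit. Unset Printing Implicit Defensive.
Import Order.TTheory GRing.Theory Num.Theory Num.Def.
Local Open Scope ring_scope.

(* Parameters: R real type, window M, number of dates N, rate r,
   volatility sigma, maturity T.  A vector indexed by a finite increasing
   list of time indices J is represented by a [seq R] aligned with J. *)
Section BMA.
Variables (R : realType) (M N : nat) (r sigma T : R).

Definition dt : R := T / N%:R.

(* J_n = {n-M+1, ..., min(n-1, N-M+1)} U {n}, in increasing order *)
Definition Jidx (n : nat) : seq nat :=
  rcons (iota (n.+1 - M) (minn n.-1 (N - M).+1 - (n.+1 - M)).+1) n.

Definition JBidx (n : nat) : seq nat := behead (Jidx n).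

Definition Acomp (n : nat) (a : seq R) (j : nat) : R := nth 0 a (index j (Jidx n)).

Definition Bcomp (n : nat) (b : seq R) (j : nat) : R := nth 0 b (index j (JBidx n)).

(* A_{n+1} as a function of B_n = b and S_{t_{n+1}} = s:
   A_{n+1}^{n+1} = s and A_j^{n+1} = ((n-j+1) A_j^n + s) / (n-j+2). *)
Definition nextA (n : nat) (b : seq R) (s : R) : seq R :=
  [seq (if j == n.+1 then s
        else (((n - j).+1)%:R * Bcomp n b j + s) / ((n - j).+2)%:R)
  | j <- Jidx n.+1].

Definition payoff (n : nat) (a : seq R) : R :=
  maxr 0 (Acomp n a n - Acomp n a (n.+1 - M)).

(* S_{t_{n+1}} given S_{t_n} = A_n^n (a component of B_n) and G = x *)
Definition nextS (n : nat) (b : seq R) (x : R) : R :=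
  Bcomp n b n * expR ((r - sigma ^+ 2 / 2) * dt + sigma * Num.sqrt dt * x).

(* cont k = C_{N-k}, by backward recursion; values are nonnegative,
   expectations are taken in the extended reals against N(0,1). *)
Fixpoint cont (k : nat) : seq R -> \bar R :=
  match k with
  | 0 => fun _ => 0%E
  | k'.+1 => fun b =>
      let n := (N - k'.+1)%N in
      (\int[normal_prob 0 1]_x
         ((expR (- r * dt))%:E *
          maxe (payoff n.+1 (nextA n b (nextS n b x)))%:E
               (cont k' (behead (nextA n b (nextS n b x))))))%E
  end.

Definition Cont (n : nat) : seq R -> \bar R := cont (N - n).

End BMA.

(* Main.v *)
Require Import Defs.
From HB Require Import structures.
From mathcomp Require Import all_boot all_order all_algebra.
From mathcomp Require Import all_classical all_reals all_analysis.
Import Order.TTheory GRing.Theory Num.Theory Num.Def.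
Local Open Scope ring_scope.

Section Helpers.
Local Open Scope ereal_scope.
Import HBNNSimple.
Lemma intZ_le d (T : measurableType d) (R : realType) (mu : {measure set T -> \bar R})
  (g : T -> \bar R) (c : R) : (0 < c)%R -> (forall x, 0 <= g x) ->
  c%:E * \int[mu]_x g x <= \int[mu]_x (c%:E * g x).
Proof.
move=> c0 g0.
have cg0 : forall x, 0 <= c%:E * g x by move=> x; rewrite mule_ge0// lee_fin ltW.
rewrite !ge0_integralE// !patch_setT.
set S := ereal_sup _.
set S' := ereal_sup _.
have -> : S' = c%:E * (c^-1%:E * S') by rewrite muleA -EFinM mulfV ?gt_eqF// mul1e.
apply: lee_wpmul2l; first by rewrite lee_fin ltW.
apply: ge_ereal_sup => _ [h /= hg <-].
have c0' : (0 <= c)%R by exact: ltW.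
have -> : sintegral mu (h : T -> R) = c^-1%:E * sintegral mu (scale_nnsfun h c0' : T -> R).
  rewrite /= sintegralrM muleA -EFinM mulVf ?gt_eqF// mul1e //.
apply: lee_wpmul2l; first by rewrite lee_fin invr_ge0 ltW.
apply: ereal_sup_ubound; exists (scale_nnsfun h c0') => //= x.
by rewrite EFinM lee_wpmul2l// lee_fin.
Qed.

Lemma intZ d (T : measurableType d) (R : realType) (mu : {measure set T -> \bar R})
  (g : T -> \bar R) (c : R) : (0 < c)%R -> (forall x, 0 <= g x) ->
  \int[mu]_x (c%:E * g x) = c%:E * \int[mu]_x g x.
Proof.
move=> c0 g0; apply/eqP; rewrite eq_le intZ_le // andbT.
have cg0 : forall x, 0 <= c%:E * g x by move=> x; rewrite mule_ge0// lee_fin ltW.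
have ci0 : (0 < c^-1)%R by rewrite invr_gt0.
have H := @intZ_le _ _ _ mu _ _ ci0 cg0.
have E : \int[mu]_x (c^-1%:E * (c%:E * g x)) = \int[mu]_x g x.
  by apply: eq_integral => x _; rewrite muleA -EFinM mulVf ?gt_eqF// mul1e.
rewrite E in H.
have cn0 : c != 0%R by rewrite gt_eqF.
rewrite -[X in X <= _]mul1e -(mulfV cn0) EFinM -muleA.
apply: lee_wpmul2l; first by rewrite lee_fin ltW.
exact: H.
Qed.
End Helpers.

Section Main.
Variables (R : realType) (M N : nat) (r sigma T : R).

Lemma nth_scale (c : R) (b : seq R) i :
  nth 0 (map (fun x => c * x) b) i = c * nth 0 b i.
Proof.
case: (ltnP i (size b)) => h; first by rewrite (nth_map 0).
by rewrite !nth_default ?size_map ?mulr0.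
Qed.

Lemma Bcomp_scale c n b j : @Bcomp R M N n (map (fun x => c * x) b) j = c * @Bcomp R M N n b j.
Proof. exact: nth_scale. Qed.

Lemma Acomp_scale c n b j : @Acomp R M N n (map (fun x => c * x) b) j = c * @Acomp R M N n b j.
Proof. exact: nth_scale. Qed.

Lemma nextS_scale c n b x : @nextS R M N r sigma T n (map (fun x => c * x) b) x
  = c * @nextS R M N r sigma T n b x.
Proof. by rewrite /nextS Bcomp_scale mulrA. Qed.

Lemma nextA_scale c n b s : @nextA R M N n (map (fun x => c * x) b) (c * s)
  = map (fun x => c * x) (@nextA R M N n b s).
Proof.
rewrite /nextA -map_comp; apply: eq_map => j /=.
case: ifP => // _; rewrite Bcomp_scale.
by rewrite mulrCA -mulrDr mulrA.
Qed.

Lemma payoff_scale c n a : 0 <= c ->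
  @payoff R M N n (map (fun x => c * x) a) = c * @payoff R M N n a.
Proof.
move=> c0; rewrite /payoff !Acomp_scale -mulrBr maxr_pMr // mulr0 //.
Qed.

Lemma contS k b : @cont R M N r sigma T k.+1 b =
  (\int[normal_prob 0 1]_x
         ((expR (- r * dt N T))%:E *
          maxe (@payoff R M N (N - k.+1).+1 (@nextA R M N (N - k.+1) b (@nextS R M N r sigma T (N - k.+1) b x)))%:E
               (@cont R M N r sigma T k (behead (@nextA R M N (N - k.+1) b (@nextS R M N r sigma T (N - k.+1) b x))))))%E.
Proof. reflexivity. Qed.

Lemma cont_scale k : forall (c : R) b, 0 < c ->
  @cont R M N r sigma T k (map (fun x => c * x) b) = (c%:E * @cont R M N r sigma T k b)%E.
Proof.
elim: k => [|k IH] c b c0; first by rewrite /= mule0.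
rewrite !contS.
rewrite -intZ //; last first.
  move=> x; rewrite mule_ge0 // ?lee_fin ?expR_ge0 //.
  by rewrite le_max lee_fin /payoff le_max lexx.
apply: eq_integral => x _.
rewrite nextS_scale nextA_scale behead_map payoff_scale ?ltW // IH //.
rewrite EFinM -maxe_pMr // ?lee_fin ?ltW //.
by rewrite muleCA.
Qed.

End Main.

Theorem proposition1 (R : realType) (M N : nat) (r sigma T : R) :
  (2 <= M)%N -> (M <= N)%N -> 0 < sigma -> 0 < T ->
  forall n : nat, (M <= n <= N)%N ->
  forall kappa : R, 0 < kappa ->
  forall b : seq R, size b = size (JBidx M N n) -> (forall x, x \in b -> 0 < x) ->
  Cont M N r sigma T n b = ((kappa%:E) * Cont M N r sigma T n (map (fun x => (kappa^-1 * x)%R) b))%E.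
Proof.
move=> _ _ _ _ n _ kappa k0 b _ _.
rewrite /Cont cont_scale ?invr_gt0 // muleA -EFinM mulfV ?gt_eqF // mul1e //.
Qed.
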